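(* Let $G$ be a simple, undirected, unweighted, locally finite graph and $i\sim j$ an edge with $d_i\le d_j$. Suppose $\mathrm{Ric}(i,j)\le -2+\delta$ for some $0<\delta<(1+\gamma_{\max}(i,j))^{-1}$. Then $$\frac{|Q_j|}{|\sharp_\Delta|+1}>\delta^{-1}.$$
   Context: For an edge $i\sim j$ with degrees $d_i,d_j$ and neighbour sets $S_1(\cdot)$: $\sharp_\Delta=S_1(i)\cap S_1(j)$; $\sharp_\square^i=\{k\in S_1(i)\setminus (S_1(j)\cup\{j\}) : \exists\, w\in (S_1(k)\cap S_1(j))\setminus (S_1(i)\cup\{i\})\}$, $\sharp_\square^j$ symmetric; $\gamma_{\max}=\max\big\{\max_{k\in\sharp_\square^i}|(S_1(k)\cap S_1(j))\setminus(S_1(i)\cup\{i\})|,\ \max_{w\in\sharp_\square^j}|(S_1(w)\cap S_1(i))\setminus(S_1(j)\cup\{j\})|\big\}$, with the convention $\gamma_{\max}=0$ when $\sharp_\square^i=\emptyset$. $Q_j=S_1(j)\setminus(\{i\}\cup\sharp_\Delta\cup\sharp_\square^j)$. Balanced Forman curvature: $\mathrm{Ric}(i,j)=0$ if $\min\{d_i,d_j\}=1$, otherwise $\mathrm{Ric}(i,j)=\frac{2}{d_i}+\frac{2}{d_j}-2+\frac{2|\sharp_\Delta|}{\max\{d_i,d_j\}}+\frac{|\sharp_\Delta|}{\min\{d_i,d_j\}}+\frac{\gamma_{\max}^{-1}}{\max\{d_i,d_j\}}(|\sharp_\square^i|+|\sharp_\square^j|)$, the last term being $0$ when $\sharp_\square^i=\emptyset$.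 *)

(* Defs.v *)
From mathcomp Require Import all_boot all_order all_algebra.
Set Implicit Arguments. Unset Strict Implicit. Unset Printing Implicit Defensive.
Import Order.TTheory GRing.Theory Num.Theory.
Local Open Scope ring_scope.

(* A locally finite simple undirected graph on a vertex type T (possibly
   infinite) is given by the finite neighbour list N x = S_1(x) of every
   vertex x: duplicate-free, irreflexive (no loops) and symmetric. *)
Definition simple_locfin_graph (T : eqType) (N : T -> seq T) : Prop :=
  [/\ forall x, uniq (N x),
      forall x, x \notin N x &
      forall x y, (y \in N x) = (x \in N y)].

Section Curv.
Variables (T : eqType) (N : T -> seq T).

Definition deg (x : T) : nat := size (N x).

Definition sh_tri (i j : T) : seq T := [seq k <- N i | k \in N j].

Definition sq_wit (i j k : T) : seq T :=
  [seq w <- N k | (w \in N j) && (w \notin N i) && (w != i)].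

Definition sh_sq (i j : T) : seq T :=
  [seq k <- N i | (k \notin N j) && (k != j) && (size (sq_wit i j k) > 0)%N].

(* gamma_max(i,j); the empty max is 0, matching the stated convention *)
Definition gamma_max (i j : T) : nat :=
  maxn (\max_(k <- sh_sq i j) size (sq_wit i j k))
       (\max_(w <- sh_sq j i) size (sq_wit j i w)).

Definition Qj (i j : T) : seq T :=
  [seq w <- N j | (w != i) && (w \notin sh_tri i j) && (w \notin sh_sq j i)].

Definition Ric (R : realFieldType) (i j : T) : R :=
  let di := (deg i)%:R in let dj := (deg j)%:R in
  if (minn (deg i) (deg j) == 1)%N then 0 else
  2 / di + 2 / dj - 2
  + 2 * (size (sh_tri i j))%:R / (maxn (deg i) (deg j))%:R
  + (size (sh_tri i j))%:R / (minn (deg i) (deg j))%:R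
  + (if sh_sq i j is [::] then 0 else
       ((gamma_max i j)%:R)^-1 / (maxn (deg i) (deg j))%:R
       * ((size (sh_sq i j))%:R + (size (sh_sq j i))%:R)).
End Curv.

(* Main.v *)
Require Import Defs.
From mathcomp Require Import all_boot all_order all_algebra.
Import Order.TTheory GRing.Theory Num.Theory.
From mathcomp Require Import zify ring lra.

Lemma count_mem_le (T : eqType) (s A : seq T) : uniq s ->
  (count (mem A) s <= size A)%N.
Proof.
move=> us; rewrite -size_filter; apply: uniq_leq_size; first exact: filter_uniq.
by move=> x; rewrite mem_filter => /andP[].
Qed.

Lemma sizeQ_bound (T : eqType) (s A B : seq T) (a : T) : uniq s ->
  (size s <= size [seq x <- s | (x != a) && (x \notin A) && (x \notin B)]
     + 1 + size A + size B)%N.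
Proof.
move=> us; rewrite size_filter.
have h1 : (count (pred1 a) s <= 1)%N.
  by rewrite count_uniq_mem //; case: (a \in s).
have hA := @count_mem_le _ s A us; have hB := @count_mem_le _ s B us.
have e := count_predC (fun x => (x != a) && (x \notin A) && (x \notin B)) s.
have : (count (predC (fun x => (x != a) && (x \notin A) && (x \notin B))) s
   <= count (pred1 a) s + count (mem A) s + count (mem B) s)%N.
  elim: s {us h1 hA hB e} => //= x s IH.
  by case: (x == a); case: (x \in A); case: (x \in B) => /=; lia.
lia.
Qed.

Section G.
Variables (T : eqType) (N : T -> seq T).
Hypothesis HG : simple_locfin_graph N.

Lemma sh_sq_sym i j : sh_sq N i j = [::] -> sh_sq N j i = [::].
Proof.
case: HG => _ _ Hs.
move=> E; case E2: (sh_sq N j i) => [|k s] //.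
have : k \in sh_sq N j i by rewrite E2 mem_head.
rewrite mem_filter => /andP[/andP[/andP[kNi kj] sz] kNj].
case E3 : (sq_wit N j i k) sz => [|w s'] // _.
have : w \in sq_wit N j i k by rewrite E3 mem_head.
rewrite mem_filter => /andP[/andP[/andP[wNi wNj] wj] wNk].
have : w \in sh_sq N i j.
  rewrite mem_filter wNi wNj wj /=.
  have : k \in sq_wit N i j w.
    by rewrite mem_filter kNj kNi kj -Hs wNk.
  by case: (sq_wit N i j w).
by rewrite E.
Qed.

Lemma gamma_pos i j : sh_sq N i j != [::] -> (1 <= gamma_max N i j)%N.
Proof.
case E: (sh_sq N i j) => [|k s] // _.
have : k \in sh_sq N i j by rewrite E mem_head.
move=> kin; have := kin; rewrite mem_filter => /andP[/andP[_ sz] _].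
rewrite /gamma_max leq_max; apply/orP; left.
exact: (bigmaxn_sup_seq _ kin).
Qed.
End G.

Local Open Scope ring_scope.
Lemma final_ineq (R: realFieldType) (E t q sj g d: R): 0<d -> d*(1+g) < 1 -> 0 <= g -> 0<=t -> E <= q+1+t+sj -> 4+3*t <= d*E -> sj <= g*(d*E-4-3*t) -> t+1 < q*d.
Proof.
move=> d0 dg g0 t0 hE hX hs.
have h1 : d * E <= d * (q+1+t+sj) by rewrite ler_pM2l.
have h2 : d * sj <= d * (g*(d*E-4-3*t)) by rewrite ler_pM2l.
have h3 : 0 <= (d*E-4-3*t) * (1 - d*g) by apply: mulr_ge0; lra.
nra.
Qed.


Theorem mainTheorem7 (R : realFieldType) (T : eqType) (N : T -> seq T)
  (HG : simple_locfin_graph N) (i j : T) (Hij : j \in N i)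
  (Hdeg : (deg N i <= deg N j)%N) (delta : R)
  (Hd0 : 0 < delta) (Hd1 : delta < (1 + (gamma_max N i j)%:R)^-1)
  (HRic : Ric N R i j <= -2 + delta) :
  (size (Qj N i j))%:R / ((size (sh_tri N i j))%:R + 1) > delta^-1.
Proof.
have [Hu _ _] := HG.
have hQ := @sizeQ_bound _ (N j) (sh_tri N i j) (sh_sq N j i) i (Hu j).
have di1 : (0 < deg N i)%N by rewrite /deg; case: (N i) Hij.
have g0 : (0:R) <= (gamma_max N i j)%:R by [].
have hd1 : delta * (1 + (gamma_max N i j)%:R) < 1.
  by move: Hd1; rewrite -[(1 + _)^-1]mul1r ltr_pdivlMr // ltr_wpDr.
have dg0 : 0 <= delta * (gamma_max N i j)%:R by apply: mulr_ge0; lra.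
have dlt1 : delta < 1 by nra.
move: HRic; rewrite /Ric.
case: ifP => [_|_]; first lra.
rewrite (minn_idPl Hdeg) (maxn_idPr Hdeg).
have hE : (deg N j <= size (Qj N i j) + 1 + size (sh_tri N i j) + size (sh_sq N j i))%N by [].
have dj1 : (0 < deg N j)%N by apply: leq_trans Hdeg.
have hsym := @sh_sq_sym _ N HG i j.
have hgp := @gamma_pos _ N i j.
move: hE hsym hgp.
rewrite -(ler_nat R) !natrD.
rewrite -(ltr_nat R) in di1; rewrite -(ltr_nat R) in dj1; rewrite -(ler_nat R) in Hdeg.
set D := (deg N i)%:R in di1 Hdeg *; set E := (deg N j)%:R in dj1 Hdeg *.
set t := (size (sh_tri N i j))%:R; set q := (size (Qj N i j))%:R.
set g := (gamma_max N i j)%:R in g0 hd1 dg0 *.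
have t0 : 0 <= t by [].
have hab : E^-1 <= D^-1.
  have -> : D^-1 = E^-1 + (E - D) / (D * E) by field; lra.
  rewrite lerDl; apply: divr_ge0; [lra | apply: mulr_ge0; lra].
have b0 : 0 < E^-1 by rewrite invr_gt0.
have bE : E^-1 * E = 1 by rewrite mulVf //; lra.
have hlow : (4 + 3*t) * E^-1 <= 2 / D + 2 / E + 2 * t / E + t / D.
  nra.
move=> hE hsym hgp HR.
suff [h1 h2] : 4 + 3*t <= delta * E /\ (size (sh_sq N j i))%:R <= g * (delta * E - 4 - 3*t).
  rewrite ltr_pdivlMr; last by lra.
  rewrite mulrC ltr_pdivrMr //.
  apply: (@final_ineq _ _ _ _ _ _ _ Hd0 hd1 g0 t0 _ h1 h2); move: hE; rewrite ?mulr1n; lra.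
set si := (size (sh_sq N i j))%:R in HR *.
have si0 : 0 <= si by [].
case Es: (sh_sq N i j) si si0 HR hsym hgp => [|k s] si si0 HR hsym hgp.
  have h0 : (4 + 3*t) / E <= delta by lra.
  have h1 : 4 + 3*t <= delta * E by rewrite -ler_pdivrMr.
  split => //; rewrite hsym //= ; apply: mulr_ge0; lra.
have g1 : 1 <= g by rewrite /g ler1n; apply: hgp.
set sj := (size (sh_sq N j i))%:R in HR *.
have sj0 : 0 <= sj by [].
have hx : (4+3*t)/E + g^-1/E*(si+sj) <= delta by lra.
have Eg : 0 < E * g by apply: mulr_gt0; lra.
have := hx; rewrite -(ler_pM2r Eg).
have -> : ((4+3*t)/E + g^-1/E*(si+sj)) * (E*g) = (4+3*t)*g + (si+sj).
  by field; apply/andP; split; apply/eqP; lra.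
move=> hy.
split; nra.
Qed.
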